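(* Let $n,k$ be integers with $2<2k\le n$. The feasible set of the integer program $( * )$ is non-empty if and only if $\mathrm{Pet}(n,k)$ contains an odd cycle. Moreover, suppose $(\mathsf{u},\mathsf{v}_+,\mathsf{v}_-,r,t)$ is a solution of $( * )$. If $( * )$ has some trivial solution, then $g_{odd}(\mathrm{Pet}(n,k))=2r+1$; if all solutions of $( * )$ are nontrivial, then $g_{odd}(\mathrm{Pet}(n,k))=2r+3$.
   Context: For integers $n,k$ with $2<2k\le n$, the generalized Petersen graph $\mathrm{Pet}(n,k)$ has vertex set $\{u_0,\dots,u_{n-1}\}\cup\{v_0,\dots,v_{n-1}\}$ and edge set $\{u_iu_{i+1}\}\cup\{u_iv_i\}\cup\{v_iv_{i+k}\}$, indices modulo $n$. The integer program $( * )$ is: minimize $\mathsf{u}+\mathsf{v}_++\mathsf{v}_-$ over integers $\mathsf{u},\mathsf{v}_+,\mathsf{v}_-,r\ge 0$ and $t\in\mathbb{Z}$ subject to $\mathsf{u}+k(\mathsf{v}_+-\mathsf{v}_-)=tn$ and $\mathsf{u}+\mathsf{v}_++\mathsf{v}_-=2r+1$. A feasible point is any tuple satisfying these constraints; a solution is a minimizer; a solution is trivial if $\mathsf{u}=0$ or $\mathsf{v}_++\mathsf{v}_-=0$, and nontrivial otherwise (note all solutions have the same value $2r+1$). $g_{odd}(G)$ is the length of a shortest odd cycle of $G$. *)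

(* Defs.v *)
From HB Require Import structures.
From mathcomp Require Import all_boot all_order all_algebra.
Set Implicit Arguments. Unset Strict Implicit. Unset Printing Implicit Defensive.
Import Order.TTheory GRing.Theory Num.Theory.

(* Vertices of Pet(n,k): inl i = u_i, inr i = v_i, for i : 'I_n. *)
Definition pet_vertex (n : nat) : finType := ('I_n + 'I_n)%type.

Definition pet_adj (n k : nat) : rel (pet_vertex n) :=
  fun x y =>
    match x, y with
    | inl i, inl j => (val j == (val i + 1) %% n) || (val i == (val j + 1) %% n)
    | inl i, inr j => val i == val j
    | inr i, inl j => val i == val j
    | inr i, inr j => (val j == (val i + k) %% n) || (val i == (val j + k) %% n)
    end.

Arguments pet_adj : clear implicits.

Definition is_graph_cycle (T : eqType) (e : rel T) (c : seq T) : bool :=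
  [&& 3 <= size c, uniq c & cycle e c].

Definition has_odd_cycle (T : eqType) (e : rel T) : Prop :=
  exists c : seq T, is_graph_cycle e c /\ odd (size c).

Definition odd_girth_is (T : eqType) (e : rel T) (m : nat) : Prop :=
  (exists c : seq T, [/\ is_graph_cycle e c, odd (size c) & size c = m]) /\
  (forall c : seq T, is_graph_cycle e c -> odd (size c) -> m <= size c).

Definition ip_feasible (n k : nat) (u vp vm r : nat) (t : int) : Prop :=
  ((u%:Z + k%:Z * (vp%:Z - vm%:Z))%R = (t * n%:Z)%R) /\ u + vp + vm = 2 * r + 1.

Definition ip_solution (n k : nat) (u vp vm r : nat) (t : int) : Prop :=
  ip_feasible n k u vp vm r t /\
  (forall (u' vp' vm' r' : nat) (t' : int),
      ip_feasible n k u' vp' vm' r' t' -> u + vp + vm <= u' + vp' + vm').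

Definition ip_trivial (u vp vm : nat) : Prop := u = 0 \/ vp + vm = 0.

(* Main.v *)
Require Import Defs.
From mathcomp Require Import all_boot all_order all_algebra.
From mathcomp Require Import zify.
From Stdlib Require Import Lia Classical.
Import Order.TTheory GRing.Theory Num.Theory.
Import intZmod.
Set Implicit Arguments. Unset Strict Implicit.
Local Open Scope ring_scope. Local Open Scope nat_scope.

Definition kindv n k (x y : pet_vertex n) : nat :=
 match x, y with
 | inl i, inl j => if val j == (val i + 1) %% n then 0 else 1
 | inr i, inr j => if val j == (val i + k) %% n then 2 else 3
 | _, _ => 4 end.

Definition pos n (x : pet_vertex n) : nat := match x with inl i => val i | inr i => val i end.
Definition side n (x : pet_vertex n) : bool := match x with inl _ => false | inr _ => true end.

Fixpoint cnt n k K (x : pet_vertex n) (q : seq (pet_vertex n)) : nat :=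
 match q with [::] => 0 | y :: q' => (kindv k x y == K) + cnt k K y q' end.

Lemma edge_d n k (x y : pet_vertex n) : pet_adj n k x y ->
  exists q : int, (((kindv k x y == 0%N) : nat)%:Z - ((kindv k x y == 1%N) : nat)%:Z
     + k%:Z * (((kindv k x y == 2%N) : nat)%:Z - ((kindv k x y == 3%N) : nat)%:Z)
    = (pos y)%:Z - (pos x)%:Z + q * n%:Z)%R.
Proof.
case: x => [i|i]; case: y => [j|j] /=.
- case: ifP => [/eqP -> _|_ /= /eqP E].
  + exists ((i+1) %/ n)%:Z. move: (divn_eq (i+1) n). set a := _ %/ n; set b := _ %% n. nia.
  + exists (- ((j+1) %/ n)%:Z)%R. rewrite E. move: (divn_eq (j+1) n). set a := _ %/ n; set b := _ %% n. nia.
- move=> /eqP E; exists 0%R. rewrite E. lia.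
- move=> /eqP E; exists 0%R. rewrite E. lia.
- case: ifP => [/eqP -> _|_ /= /eqP E].
  + exists ((i+k) %/ n)%:Z. move: (divn_eq (i+k) n). set a := _ %/ n; set b := _ %% n. nia.
  + exists (- ((j+k) %/ n)%:Z)%R. rewrite E. move: (divn_eq (j+k) n). set a := _ %/ n; set b := _ %% n. nia.
Qed.

Definition Dsum n k (x : pet_vertex n) q : int :=
  ((cnt k 0 x q)%:Z - (cnt k 1 x q)%:Z + k%:Z * ((cnt k 2 x q)%:Z - (cnt k 3 x q)%:Z))%R.

Lemma path_d n k (x : pet_vertex n) q : path (pet_adj n k) x q ->
  exists t : int, Dsum k x q = ((pos (last x q))%:Z - (pos x)%:Z + t * n%:Z)%R.
Proof.
elim: q x => [|y q IH] x /=.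
  by move=> _; exists 0%R; rewrite /Dsum /=; lia.
move=> /andP [Exy Hp]; have [t1 H1] := edge_d Exy; have [t2 H2] := IH _ Hp.
exists (t1 + t2)%R; rewrite /Dsum /=. rewrite /Dsum in H2.
move: H1 H2; set a := kindv k x y.
case: (a == 0) ; case: (a == 1); case: (a == 2); case: (a == 3); rewrite /=; nia.
Qed.

Lemma path_side n k (x : pet_vertex n) q :
  odd (cnt k 4 x q) = side x (+) side (last x q).
Proof.
elim: q x => [|y q IH] x /=; first by case: (side x).
rewrite oddD IH; case: x => i; case: y => j /=; rewrite /kindv;
  try (case: ifP => _); by case: (side _).
Qed.

Lemma path_nospoke n k (x : pet_vertex n) q : cnt k 4 x q = 0 ->
  (side x = false -> cnt k 2 x q = 0 /\ cnt k 3 x q = 0) /\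
  (side x = true -> cnt k 0 x q = 0 /\ cnt k 1 x q = 0).
Proof.
elim: q x => [|y q IH] x //=.
move=> H; have H' : cnt k 4 y q = 0 by lia.
have [IH1 IH2] := IH _ H'.
case: x H => i; case: y IH1 IH2 H' => j /= IH1 IH2 H'; rewrite /kindv;
  try (case: ifP => _); move=> /= H; try lia.
all: split=> // _; first [have [? ?] := IH2 erefl; lia | have [? ?] := IH1 erefl; lia].
Qed.

Lemma path_size n k (x : pet_vertex n) q :
  cnt k 0 x q + cnt k 1 x q + cnt k 2 x q + cnt k 3 x q + cnt k 4 x q = size q.
Proof.
elim: q x => [|y q IH] x //=; rewrite -(IH y).
case: x => i; case: y => j /=; rewrite /kindv; try (case: ifP => _); simpl; lia.
Qed.

Lemma oddE m : odd m -> m = 2 * m./2 + 1.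
Proof. move=> H; rewrite -{1}(odd_double_half m) H; lia. Qed.
Lemma evenE m : ~~ odd m -> m = 2 * m./2.
Proof. move=> H; rewrite -{1}(odd_double_half m) (negbTE H); lia. Qed.

Lemma cycle_point n k (c : seq (pet_vertex n)) : is_graph_cycle (pet_adj n k) c -> odd (size c) ->
 exists (u vp vm r : nat) (t : int) (s : nat), ip_feasible n k u vp vm r t /\
   u + vp + vm + s <= size c /\ ~~ odd s /\ (s = 0 -> ip_trivial u vp vm).
Proof.
case: c => [|x p] /andP [_ /andP [_ Hc]] // Hodd.
have Hs := path_size k x (rcons p x).
have Hpar := path_side k x (rcons p x).
have [t Ht] := path_d Hc.
have Hns := @path_nospoke n k x (rcons p x).
rewrite last_rcons addbb in Hpar Ht. rewrite size_rcons in Hs.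
move: Hs Hpar Ht Hns; rewrite /Dsum.
set a := cnt k 0 _ _; set b := cnt k 1 _ _; set c2 := cnt k 2 _ _; set c3 := cnt k 3 _ _;
  set s := cnt k 4 _ _ => Hs Hpar Ht Hns.
have Hs2 := evenE (negbT Hpar).
have [Hab|Hab] := leqP b a.
- exists (a - b), c2, c3, ((a - b + c2 + c3)./2), t, s; split; [split|split; [|split]] => //.
  + rewrite -(subzn Hab); move: Ht; rewrite subrr add0r => ->; done.
  + apply: oddE. have -> : a - b + c2 + c3 = (size p).+1 - 2 * (b + s./2) by lia.
    rewrite oddB; [by rewrite oddM /= addbF | lia].
  + apply: (leq_trans _ (eq_leq Hs)); lia.
  + by rewrite Hpar.
  + move=> Hs0; case Hx: (side x); [have [? ?] := (Hns Hs0).2 Hx; left; lia | have [? ?] := (Hns Hs0).1 Hx; right; lia].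
- exists (b - a), c3, c2, ((b - a + c3 + c2)./2), (- t)%R, s; split; [split|split; [|split]] => //.
  + rewrite -(subzn (ltnW Hab)) mulNr; move: Ht; rewrite subrr add0r => <-; lia.
  + apply: oddE. have -> : b - a + c3 + c2 = (size p).+1 - 2 * (a + s./2) by lia.
    rewrite oddB; [by rewrite oddM /= addbF | lia].
  + apply: (leq_trans _ (eq_leq Hs)); lia.
  + by rewrite Hpar.
  + move=> Hs0; case Hx: (side x); [have [? ?] := (Hns Hs0).2 Hx; left; lia | have [? ?] := (Hns Hs0).1 Hx; right; lia].
Qed.

Lemma path_iota (T : Type) (e : rel T) (f : nat -> T) m len :
  (forall i, m <= i < m + len -> e (f i) (f i.+1)) -> path e (f m) [seq f i | i <- iota m.+1 len].
Proof.
elim: len m => [|len IH] m H //=.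
rewrite H ?leqnn ?addnS ?ltnS ?leq_addr //= IH // => i /andP [H1 H2]; apply: H.
rewrite (ltnW H1) /=; lia.
Qed.

Lemma cycle_of_fun (T : eqType) (e : rel T) (f : nat -> T) len : 0 < len -> f len = f 0 ->
  (forall i, i < len -> e (f i) (f i.+1)) -> cycle e [seq f i | i <- iota 0 len].
Proof.
case: len => [|len] // _ Hf H.
rewrite /= -{2}Hf -map_rcons.
have -> : rcons (iota 1 len) len.+1 = iota 1 len.+1.
  by rewrite -cats1 -[in RHS](addn1 len) iotaD add1n.
by apply: path_iota => i /andP [_ Hi]; apply: H.
Qed.

Definition o n (Hn : 0 < n) (i : nat) : 'I_n := Ordinal (ltn_pmod i Hn).

Lemma adj_u n k (Hn : 0 < n) a : pet_adj n k (inl (o Hn a)) (inl (o Hn a.+1)).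
Proof. by rewrite /= modnDml addn1 eqxx. Qed.

Lemma adj_s n k (Hn : 0 < n) a b : a %% n = b %% n -> pet_adj n k (inl (o Hn a)) (inr (o Hn b)).
Proof. by move=> /= ->. Qed.
Lemma adj_s' n k (Hn : 0 < n) a b : a %% n = b %% n -> pet_adj n k (inr (o Hn a)) (inl (o Hn b)).
Proof. by move=> /= ->. Qed.

Lemma adj_v n k (Hn : 0 < n) st a : (st = k \/ st + k = n) ->
  pet_adj n k (inr (o Hn a)) (inr (o Hn (a + st))).
Proof.
case=> [->|Hs]; first by rewrite /= modnDml eqxx.
apply/orP; right; rewrite /= modnDml -addnA Hs modnDr eqxx //.
Qed.

Lemma o_eq n (Hn : 0 < n) a b : a %% n = b %% n -> o Hn a = o Hn b.
Proof. by move=> H; apply: val_inj. Qed.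
Lemma o_val n (Hn : 0 < n) a : val (o Hn a) = a %% n.
Proof. by []. Qed.

Lemma ucycle n k (Hn : 0 < n) : 3 <= n ->
  is_graph_cycle (pet_adj n k) [seq inl (o Hn i) | i <- iota 0 n] /\
  size [seq inl (o Hn i) : pet_vertex n | i <- iota 0 n] = n.
Proof.
move=> H3; rewrite size_map size_iota; split=> //.
apply/and3P; split; first by rewrite size_map size_iota.
- rewrite map_inj_in_uniq ?iota_uniq // => i j; rewrite !mem_iota /= => Hi Hj [] E.
  move: E; rewrite /= !modn_small //; lia.
- apply: (cycle_of_fun (f := fun i => inl (o Hn i))); first lia.
  + by rewrite (@o_eq _ _ n 0) // modnn mod0n.
  + by move=> i _; apply: adj_u.
Qed.

Lemma vcycle n k (Hn : 0 < n) st v : (st = k \/ st + k = n) -> 3 <= v -> (v * st) %% n = 0 ->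
  (forall j1 j2, j1 < j2 < v -> (j1 * st) %% n != (j2 * st) %% n) ->
  is_graph_cycle (pet_adj n k) [seq inr (o Hn (j * st)) | j <- iota 0 v] /\
  size [seq inr (o Hn (j * st)) : pet_vertex n | j <- iota 0 v] = v.
Proof.
move=> Hst H3 Hv Hd; rewrite size_map size_iota; split=> //.
apply/and3P; split; first by rewrite size_map size_iota.
- rewrite map_inj_in_uniq ?iota_uniq // => i j; rewrite !mem_iota /= => Hi Hj [] E. case: (ltngtP i j) => // Hij.
  + have H : i < j < v by lia.
    by move: (Hd _ _ H); rewrite E eqxx.
  + have H : j < i < v by lia.
    by move: (Hd _ _ H); rewrite E eqxx.
- apply: (cycle_of_fun (f := fun j => inr (o Hn (j * st)))); first lia.
  + by rewrite (@o_eq _ _ (v * st) 0) // Hv mod0n.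
  + by move=> i _; rewrite mulSn addnC; apply: adj_v.
Qed.

Lemma mcycle n k (Hn : 0 < n) st u v : (st = k \/ st + k = n) -> 0 < u < n -> (u + v * st) %% n = 0 ->
  (forall j1 j2, j1 < j2 <= v -> (u + j1 * st) %% n != (u + j2 * st) %% n) ->
  exists c, is_graph_cycle (pet_adj n k) c /\ size c = u + v + 2.
Proof.
move=> Hst /andP [Hu0 Hun] Hv Hd.
pose h i : pet_vertex n := if i <= u then inl (o Hn i) else if i <= u + v + 1
   then inr (o Hn (u + (i - u.+1) * st)) else inl (o Hn 0).
have hE : forall i, i < u + v + 2 ->
  (i <= u /\ h i = inl (o Hn i)) \/ (u < i <= u + v + 1 /\ h i = inr (o Hn (u + (i - u.+1) * st))).
  move=> i Hi; rewrite /h; case: (leqP i u) => H1; first by left.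
  by right; rewrite ifT; [split=> //; lia | lia].
exists [seq h i | i <- iota 0 (u + v + 2)]; rewrite size_map size_iota; split=> //.
apply/and3P; split; first by rewrite size_map size_iota; lia.
- rewrite map_inj_in_uniq ?iota_uniq // => i j; rewrite !mem_iota /= => Hi Hj.
  case: (hE i Hi) => [[Hi1 ->]|[Hi1 ->]]; case: (hE j Hj) => [[Hj1 ->]|[Hj1 ->]] // [] E.
  + move: E; rewrite /= !modn_small //; lia.
  + case: (ltngtP (i - u.+1) (j - u.+1)) => Hij.
    * have H : i - u.+1 < j - u.+1 <= v by lia.
      by move: (Hd _ _ H); rewrite E eqxx.
    * have H : j - u.+1 < i - u.+1 <= v by lia.
      by move: (Hd _ _ H); rewrite E eqxx.
    * lia.
- have hA : forall i, i <= u -> h i = inl (o Hn i) by move=> i Hi; rewrite /h Hi.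
  have hB : forall i, u < i <= u + v + 1 -> h i = inr (o Hn (u + (i - u.+1) * st)).
    move=> i /andP [Hi1 Hi2]; rewrite /h Hi2; case: ifP => //; lia.
  have hC : forall i, u + v + 1 < i -> h i = inl (o Hn 0).
    move=> i Hi; rewrite /h; case: ifP; [lia|]; case: ifP; [lia|done].
  apply: (cycle_of_fun (f := h)); first lia.
  + by rewrite hC ?hA //; lia.
  + move=> i Hi; case: (ltngtP i u) => H1.
    * rewrite !hA //; [apply: adj_u | lia].
    * have [H2|H2] := ltnP i (u + v + 1).
      - rewrite !hB; [|lia|lia].
        have -> : u + (i.+1 - u.+1) * st = u + (i - u.+1) * st + st.
          have -> : i.+1 - u.+1 = (i - u.+1).+1 by lia.
          rewrite mulSn; lia.
        by apply: adj_v.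
      - have Ei : i = u + v + 1 by lia.
        rewrite (hC i.+1) ?(hB i); [|lia|lia].
        apply: adj_s'; rewrite Ei mod0n -Hv; congr (_ %% _); congr (_ + _ * _); lia.
    * rewrite (hA i) ?(hB i.+1); [|lia|lia].
      by apply: adj_s; rewrite H1 subnn mul0n addn0.
Qed.

Lemma int_mod0 a n (t : int) : 0 < n -> a%:Z = (t * n%:Z)%R -> a %% n = 0.
Proof.
move=> Hn; case: t => m H.
- have -> : a = m * n by lia.
  by rewrite modnMl.
- exfalso; move: H; rewrite NegzE; nia.
Qed.

Lemma mod0_mul a n : a %% n = 0 -> a = a %/ n * n.
Proof. by move=> H; rewrite {1}(divn_eq a n) H addn0. Qed.

Lemma odd_of m y : m = 2 * y + 1 -> odd m.
Proof. by move=> ->; rewrite oddD oddM. Qed.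

Lemma feas_of n k u vp vm (t : int) : (u%:Z + k%:Z * (vp%:Z - vm%:Z) = t * n%:Z)%R ->
  odd (u + vp + vm) -> ip_feasible n k u vp vm ((u + vp + vm)./2) t.
Proof. by move=> H1 H2; split => //; apply: oddE. Qed.

Lemma sol_min n k u vp vm r t u' vp' vm' r' t' : ip_solution n k u vp vm r t ->
  ip_feasible n k u' vp' vm' r' t' -> u' + vp' + vm' < u + vp + vm -> False.
Proof. by move=> [_ H] /H; lia. Qed.

Lemma sol_F1 n k u vp vm r t : ip_solution n k u vp vm r t -> vp = 0 \/ vm = 0.
Proof.
move=> S; case: (posnP vp) => Hp; first by left.
case: (posnP vm) => Hm; first by right.
exfalso; have [[F1 F2] _] := S.
apply: (sol_min (u' := u) (vp' := vp.-1) (vm' := vm.-1) (r' := r.-1) (t' := t) S); last lia.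
split; last lia.
rewrite -F1; have -> : vp = vp.-1.+1 by lia. have -> : vm = vm.-1.+1 by lia. lia.
Qed.

Lemma sol_F2 n k u vp vm r t : 3 < n -> ip_solution n k u vp vm r t -> n <= u ->
  u = n /\ vp = 0 /\ vm = 0.
Proof.
move=> Hn S Hu; have [[F1 F2] Hmin] := S.
case Ho: (odd n).
- have Hf : ip_feasible n k n 0 0 n./2 1.
    split; last by rewrite !addn0 -oddE.
    lia.
  have := Hmin _ _ _ _ _ Hf; lia.
- exfalso; apply: (sol_min (u' := u - n) (vp' := vp) (vm' := vm) (r' := r - n./2) (t' := (t - 1)%R) S); last lia.
  have := evenE (negbT Ho) => En.
  split; last lia.
  rewrite -(subzn Hu) mulrBl mul1r -F1; lia.
Qed.

Lemma P_dist n k u v r t d : 0 < n -> ip_solution n k u v 0 r t -> 0 < d <= v -> (d * k) %% n = 0 ->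
  (u = 0 -> d < v) -> False.
Proof.
move=> Hn S Hd Hdk Hu.
have Em := mod0_mul Hdk. set m := d * k %/ n in Em.
have [[F1 F2] _] := S.
case Hod: (odd d).
- apply: (sol_min (u' := 0) (vp' := d) (vm' := 0) (r' := d./2) (t' := m%:Z) S).
  + split; last by rewrite add0n addn0 -oddE.
    rewrite add0r subr0 -PoszM mulnC Em; lia.
  + case: (posnP u) => Hu0; [have := Hu Hu0|]; lia.
- have Ed := evenE (negbT Hod).
  apply: (sol_min (u' := u) (vp' := v - d) (vm' := 0) (r' := r - d./2) (t' := (t - m%:Z)%R) S); last lia.
  split; last lia.
  rewrite subr0 -(subzn (_ : d <= v)); last lia.
  move: F1; rewrite subr0 => F1.
  rewrite mulrBr addrA F1 mulrBl -PoszM mulnC Em; lia.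
Qed.

Lemma P_inner n k v r t : 0 < k < n -> ip_solution n k 0 v 0 r t ->
  exists c, is_graph_cycle (pet_adj n k) c /\ size c = 2 * r + 1.
Proof.
move=> /andP [Hk0 Hkn] S.
have Hn : 0 < n by lia.
have [[F1 F2] _] := S.
have Hv : (v * k) %% n = 0.
  apply: (int_mod0 (t := t)) => //; rewrite -F1 add0r subr0 PoszM; lia.
have Hv3 : 3 <= v.
  have Ho : odd v by apply: (odd_of (y := r)); lia.
  case: v Ho Hv {S F1 F2} => [|[|[|v]]] // _.
  rewrite mul1n modn_small //; lia.
have Hdist : forall j1 j2, j1 < j2 < v -> (j1 * k) %% n != (j2 * k) %% n.
  move=> j1 j2 Hj; apply/negP => /eqP E.
  apply: (P_dist (d := j2 - j1) Hn S); [lia| |lia].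
  have E2 : j2 * k = j1 * k + (j2 - j1) * k by rewrite -mulnDl; congr (_ * _); lia.
  move: E; rewrite E2 -{1}(addn0 (j1 * k)) => /eqP; rewrite eqn_modDl mod0n => /eqP <- //.
have [C1 C2] := vcycle Hn (or_introl erefl) Hv3 Hv Hdist.
by eexists; split; [exact: C1 | rewrite C2; lia].
Qed.

Lemma P_mixed n k u v r t : 0 < k < n -> 3 < n -> ip_solution n k u v 0 r t -> 0 < u -> 0 < v ->
  exists c, is_graph_cycle (pet_adj n k) c /\ size c = 2 * r + 3.
Proof.
move=> /andP [Hk0 Hkn] Hn3 S Hu Hv0.
have Hn : 0 < n by lia.
have [[F1 F2] _] := S.
have Hun : u < n.
  case: (ltnP u n) => // H; have := sol_F2 Hn3 S H; lia.
have Hv : (u + v * k) %% n = 0.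
  apply: (int_mod0 (t := t)) => //; rewrite -F1 subr0 PoszD PoszM; lia.
have Hdist : forall j1 j2, j1 < j2 <= v -> (u + j1 * k) %% n != (u + j2 * k) %% n.
  move=> j1 j2 Hj; apply/negP => /eqP E.
  apply: (P_dist (d := j2 - j1) Hn S); [lia| |lia].
  have E2 : u + j2 * k = (u + j1 * k) + (j2 - j1) * k by rewrite -addnA -mulnDl; congr (_ + _ * _); lia.
  move: E; rewrite E2 -{1}(addn0 (u + j1 * k)) => /eqP; rewrite eqn_modDl mod0n => /eqP <- //.
have Hu2 : 0 < u < n by rewrite Hu Hun.
have [c [C1 C2]] := mcycle Hn (or_introl erefl) Hu2 Hv Hdist.
by exists c; split; [exact: C1 | rewrite C2; lia].
Qed.

Lemma outer_cyc n k u r t : 3 < n -> ip_solution n k u 0 0 r t ->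
  exists c, is_graph_cycle (pet_adj n k) c /\ size c = 2 * r + 1.
Proof.
move=> Hn3 S; have Hn : 0 < n by lia.
have [[F1 F2] _] := S.
have Hu : u %% n = 0.
  apply: (int_mod0 (t := t)) => //; rewrite -F1 subr0 mulr0 addr0 //.
have Hnu : n <= u.
  apply: dvdn_leq; [lia | by apply/dvdnP; exists (u %/ n); apply: mod0_mul].
have [Eu _] := sol_F2 Hn3 S Hnu.
have [C1 C2] := @ucycle n k Hn (ltnW Hn3).
by eexists; split; [exact: C1 | rewrite C2; lia].
Qed.

Lemma swap_aux n k a b : k <= n -> a < n -> b < n ->
  (b == (a + (n - k)) %% n) = (a == (b + k) %% n).
Proof.
move=> Hk Ha Hb; apply/eqP/eqP => ->.
- by rewrite modnDml -addnA subnK // modnDr modn_small.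
- by rewrite modnDml -addnA subnKC // modnDr modn_small.
Qed.

Lemma adj_swap n k : k <= n -> pet_adj n (n - k) =2 pet_adj n k.
Proof.
move=> Hk [i|i] [j|j] //=.
by rewrite !swap_aux // orbC.
Qed.

Lemma cyc_swap n k c : k <= n -> is_graph_cycle (pet_adj n (n - k)) c -> is_graph_cycle (pet_adj n k) c.
Proof. by move=> Hk; rewrite /is_graph_cycle (eq_cycle (adj_swap Hk)). Qed.

Lemma feas_swap n k u vp vm r t : k <= n -> ip_feasible n k u vp vm r t ->
  ip_feasible n (n - k) u vm vp r (t + vm%:Z - vp%:Z)%R.
Proof.
move=> Hk [F1 F2]; split; last lia.
rewrite -(subzn Hk); move: F1; nia.
Qed.

Lemma sol_swap n k u vp vm r t : k <= n -> ip_solution n k u vp vm r t ->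
  ip_solution n (n - k) u vm vp r (t + vm%:Z - vp%:Z)%R.
Proof.
move=> Hk [F H]; split; first exact: feas_swap.
move=> u' vp' vm' r' t' F'.
have := feas_swap (_ : n - k <= n) F'; rewrite subKn // => /(_ (leq_subr _ _)) /H; lia.
Qed.

Lemma sol_exists n k : (exists (u vp vm r : nat) (t : int), ip_feasible n k u vp vm r t) ->
  exists (u vp vm r : nat) (t : int), ip_solution n k u vp vm r t.
Proof.
suff H : forall m u vp vm r t, u + vp + vm <= m -> ip_feasible n k u vp vm r t ->
   exists (u vp vm r : nat) (t : int), ip_solution n k u vp vm r t.
  by move=> [u [vp [vm [r [t F]]]]]; exact: (H _ _ _ _ _ _ (leqnn _) F).
elim=> [|m IH] u vp vm r t Hm F.
- by exfalso; move: F => [_]; lia.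
- case: (classic (exists (u' vp' vm' r' : nat) (t' : int), ip_feasible n k u' vp' vm' r' t' /\
      u' + vp' + vm' < u + vp + vm)).
  + move=> [u' [vp' [vm' [r' [t' [F' H']]]]]]; apply: (IH u' vp' vm' r' t') => //; lia.
  + move=> Hno; exists u, vp, vm, r, t; split => // u' vp' vm' r' t' F'.
    case: (leqP (u + vp + vm) (u' + vp' + vm')) => // Hlt; exfalso; apply: Hno.
    by exists u', vp', vm', r', t'.
Qed.

Lemma sol_cycle_triv n k u vp vm r t : 0 < k < n -> 3 < n -> ip_solution n k u vp vm r t ->
  ip_trivial u vp vm -> exists c, is_graph_cycle (pet_adj n k) c /\ size c = 2 * r + 1.
Proof.
move=> Hk Hn3 S [Hu|Hv].
- subst u; case: (sol_F1 S) => H; subst.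
  + have S' := sol_swap (ltnW (proj2 (andP Hk))) S.
    have Hk' : 0 < n - k < n by lia.
    have [c [C1 C2]] := P_inner Hk' S'.
    by exists c; split => //; apply: cyc_swap => //; lia.
  + exact: P_inner Hk S.
- have [E1 E2] : vp = 0 /\ vm = 0 by lia.
  subst; exact: outer_cyc Hn3 S.
Qed.

Lemma sol_cycle_ntriv n k u vp vm r t : 0 < k < n -> 3 < n -> ip_solution n k u vp vm r t ->
  ~ ip_trivial u vp vm -> exists c, is_graph_cycle (pet_adj n k) c /\ size c = 2 * r + 3.
Proof.
move=> Hk Hn3 S Hnt.
have Hu : 0 < u by case: (posnP u) => // H; exfalso; apply: Hnt; left.
have Hv : 0 < vp + vm by case: (posnP (vp + vm)) => // H; exfalso; apply: Hnt; right.
case: (sol_F1 S) => H; subst.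
- have S' := sol_swap (ltnW (proj2 (andP Hk))) S.
  have Hk' : 0 < n - k < n by lia.
  have [c [C1 C2]] := P_mixed Hk' Hn3 S' Hu Hv.
  by exists c; split => //; apply: cyc_swap => //; lia.
- rewrite addn0 in Hv; exact: P_mixed Hk Hn3 S Hu Hv.
Qed.

Theorem theorem8 (n k : nat) (hk : 2 < 2 * k) (hkn : 2 * k <= n) :
  ((exists (u vp vm r : nat) (t : int), ip_feasible n k u vp vm r t)
     <-> has_odd_cycle (pet_adj n k)) /\
  (forall (u vp vm r : nat) (t : int), ip_solution n k u vp vm r t ->
     ((exists (u' vp' vm' r' : nat) (t' : int),
          ip_solution n k u' vp' vm' r' t' /\ ip_trivial u' vp' vm') ->
        odd_girth_is (pet_adj n k) (2 * r + 1)) /\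
     ((forall (u' vp' vm' r' : nat) (t' : int),
          ip_solution n k u' vp' vm' r' t' -> ~ ip_trivial u' vp' vm') ->
        odd_girth_is (pet_adj n k) (2 * r + 3))).
Proof.
have Hk : 0 < k < n by apply/andP; split; lia.
have Hn3 : 3 < n by lia.
split; [split|].
- move=> Hf; have [u [vp [vm [r [t S]]]]] := sol_exists Hf.
  case: (classic (ip_trivial u vp vm)) => T.
  + have [c [C1 C2]] := sol_cycle_triv Hk Hn3 S T.
    by exists c; split => //; apply: (odd_of (y := r)).
  + have [c [C1 C2]] := sol_cycle_ntriv Hk Hn3 S T.
    by exists c; split => //; apply: (odd_of (y := r.+1)); lia.
- move=> [c [C Ho]]; have [u [vp [vm [r [t [s [F _]]]]]]] := cycle_point C Ho.
  by exists u, vp, vm, r, t.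
- move=> u vp vm r t S; split.
  + move=> [u' [vp' [vm' [r' [t' [S' T']]]]]].
    have [c [C1 C2]] := sol_cycle_triv Hk Hn3 S' T'.
    have Er : r' = r.
      have [[_ E1] M1] := S; have [[_ E2] M2] := S'.
      have := M1 _ _ _ _ _ S'.1; have := M2 _ _ _ _ _ S.1; lia.
    subst r'; split.
    * by exists c; split => //; apply: (odd_of (y := r)).
    * move=> c' C' Ho'; have [u2 [vp2 [vm2 [r2 [t2 [s [F [Hle _]]]]]]]] := cycle_point C' Ho'.
      have [[_ E1] M1] := S; have := M1 _ _ _ _ _ F; move=> H; apply: leq_trans Hle; lia.
  + move=> Hall; have T : ~ ip_trivial u vp vm := Hall _ _ _ _ _ S.
    have [c [C1 C2]] := sol_cycle_ntriv Hk Hn3 S T.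
    split.
    * by exists c; split => //; apply: (odd_of (y := r.+1)); lia.
    * move=> c' C' Ho'; have [u2 [vp2 [vm2 [r2 [t2 [s [F [Hle [Hs Hs0]]]]]]]]] := cycle_point C' Ho'.
      have [[_ E1] M1] := S; have M := M1 _ _ _ _ _ F.
      have [_ E2] := F.
      case: (posnP s) => Hs'.
      - have T2 := Hs0 Hs'.
        case: (eqVneq r2 r) => Er.
        { exfalso; subst r2; apply: (Hall u2 vp2 vm2 r t2) => //; split => // u3 vp3 vm3 r3 t3 F3.
          have := M1 _ _ _ _ _ F3; lia. }
        apply: leq_trans Hle; lia.
      - have := evenE Hs => Hs2; apply: leq_trans Hle; lia.
Qed.
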